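(* Let $\mathcal T$ be a good triangulation of $\mathcal C_G$ and let $S$ be any simplex of $\mathcal T$. Then the graph $(V,D(S))$ contains no cycle, i.e. there is no cycle of double edges.
   Context: For a finite undirected multigraph $G=(V,E)$ (loops, parallel edges and isolated nodes allowed) with $n=|V|$, $m=|E|$, work in $\mathbb{R}^V\times\mathbb{R}^E\cong\mathbb{R}^{n+m}$ with standard basis vectors $e_u$ ($u\in V$), $e_f$ ($f\in E$). Fix for each edge $f$ an ordering $(u,v)$ of its endpoints ($u=v$ for a loop) and set $\widetilde e_f=e_u+e_v-e_f$, $\overleftarrow e_f=e_u-e_v+e_f$, $\overrightarrow e_f=-e_u+e_v+e_f$ (so for a loop $\overleftarrow e_f=\overrightarrow e_f=e_f$). The cosmological polytope $\mathcal C_G$ is the convex hull of $\{e_f,\widetilde e_f,\overleftarrow e_f,\overrightarrow e_f: f\in E\}\cup\{e_u: u\in V\}$; these are exactly its lattice points, and it is an $(n+m-1)$-dimensional polytope in the hyperplane $\sum_i x_i=1$. A good triangulation of $\mathcal C_G$ is a regular triangulation (induced by a height function on the lattice points of $\mathcal C_G$) whose vertex set is the set of all lattice points of $\mathcal C_G$ and which contains the standard simplex $\mathrm{conv}\{e_u,e_f: u\in V, f\in E\}$ as a maximal cell; simplices are identified with their vertex sets. For a simplex $S\in\mathcal T$: the selected nodes are $V(S)=\{u\in V: e_u\in S\}$; the squiggly edges $\widetilde E(S)=\{f:\widetilde e_f\in S\}$; the selected edges $\widehat E(S)=\{f: e_f\in S\}$; for non-loop edges $f$, $f\in\overleftarrow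 E(S)$ iff $\overleftarrow e_f\in S$ and $f\in\overrightarrow E(S)$ iff $\overrightarrow e_f\in S$ (loops are never in $\overleftarrow E(S)\cup\overrightarrow E(S)$); the double edges are $D(S)=(\overleftarrow E(S)\cup\overrightarrow E(S))\cap\widehat E(S)$. *)

(* Defs.v *)
From mathcomp Require Import all_boot all_order all_algebra.
From mathcomp Require Import reals.
Set Implicit Arguments. Unset Strict Implicit. Unset Printing Implicit Defensive.
Import Order.TTheory GRing.Theory Num.Theory.
Local Open Scope ring_scope.

(* A finite multigraph: node type V, edge type E, each edge f with a fixed
   ordering (src f, tgt f) of its endpoints; loops: src f = tgt f. *)

Section Cosmo.
Variables (R : realType) (V E : finType) (src tgt : E -> V).

Definition pt := {ffun (V + E)%type -> R}.

Definition ev (u : V) : pt := [ffun i => if i == inl u then 1 else 0].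
Definition ee (f : E) : pt := [ffun i => if i == inr f then 1 else 0].
Definition etilde (f : E) : pt := ev (src f) + ev (tgt f) - ee f.
Definition eleft (f : E) : pt := ev (src f) - ev (tgt f) + ee f.
Definition eright (f : E) : pt := - ev (src f) + ev (tgt f) + ee f.

(* the lattice points of the cosmological polytope C_G *)
Definition isLP (x : pt) : bool :=
  [exists u, x == ev u] ||
  [exists f, [|| x == ee f, x == etilde f, x == eleft f | x == eright f]].

Definition stdS (x : pt) : bool := [exists u, x == ev u] || [exists f, x == ee f].

Definition lps : seq pt :=
  undup ([seq ev u | u <- enum V] ++ [seq ee f | f <- enum E] ++
         [seq etilde f | f <- enum E] ++ [seq eleft f | f <- enum E] ++
         [seq eright f | f <- enum E]).

Definition lin (c x : pt) : R := \sum_i c i * x i.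

(* S (a set of lattice points) is a cell of the regular subdivision
   induced by the height function omega: the set of points where some affine
   function lying weakly below omega on all lattice points agrees with omega *)
Definition is_cell (omega : pt -> R) (S : pred pt) : Prop :=
  exists (c : pt) (b : R),
    (forall a, isLP a -> lin c a + b <= omega a) /\
    (forall x, S x = isLP x && (lin c x + b == omega x)).

Definition aff_indep (S : pred pt) : Prop :=
  forall lam : pt -> R,
    \sum_(x <- lps | S x) lam x = 0 ->
    (forall i, \sum_(x <- lps | S x) lam x * x i = 0) ->
    forall x, isLP x -> S x -> lam x = 0.

(* good triangulation: the regular subdivision induced by omega is a
   triangulation (all cells are simplices), every lattice point is used as a
   vertex, and the standard simplex is a maximal cell *)
Definition good_triangulation (omega : pt -> R) : Prop :=
  [/\ forall S, is_cell omega S -> aff_indep S,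
      forall a, isLP a -> exists S, is_cell omega S /\ S a,
      is_cell omega stdS &
      forall S, is_cell omega S -> (forall x, stdS x -> S x) ->
        forall x, S x -> stdS x].

Definition is_loop (f : E) : bool := src f == tgt f.

Definition double_edges (S : pred pt) (f : E) : bool :=
  [&& ~~ is_loop f, S (ee f) & S (eleft f) || S (eright f)].

Definition has_cycle (D : pred E) : Prop :=
  exists k (vs : 'I_k -> V) (es : 'I_k -> E),
    [/\ 0 < k, injective vs, injective es,
        forall i, D (es i) &
        forall i, (src (es i) = vs i /\ tgt (es i) = vs (ordS i)) \/
                  (src (es i) = vs (ordS i) /\ tgt (es i) = vs i)]%N.

End Cosmo.

(* Main.v *)
Require Import Defs.
From mathcomp Require Import all_boot all_order all_algebra.
From mathcomp Require Import reals.
From mathcomp Require Import ring.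
Set Implicit Arguments. Unset Strict Implicit. Unset Printing Implicit Defensive.
Import Order.TTheory GRing.Theory Num.Theory.
Local Open Scope ring_scope.

Lemma sum_pick (R : realType) (T : eqType) (s : seq T) (P : pred T) (p : T)
  (F : T -> R) :
  uniq s -> p \in s -> P p ->
  \sum_(x <- s | P x) (x == p)%:R * F x = F p.
Proof.
move=> us ps Pp.
rewrite -big_filter (bigD1_seq p) ?filter_uniq ?mem_filter ?Pp //=.
rewrite eqxx mul1r big1 ?addr0 // => x /negbTE ->; by rewrite mul0r.
Qed.

Theorem mainTheorem4 (R : realType) (V E : finType) (src tgt : E -> V)
    (omega : pt R V E -> R) :
  good_triangulation src tgt omega ->
  forall S : pred (pt R V E), is_cell src tgt omega S ->
  ~ has_cycle src tgt (double_edges src tgt S).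
Proof.
move=> [indep _ _ _] S cellS [k [vs [es [k0 _ ies HD Hend]]]].
have SLP : forall x, S x -> isLP src tgt x.
  by case: cellS => c [b [_ HS]] x; rewrite HS => /andP[].
pose w i : pt R V E := ev R E (vs i) - ev R E (vs (ordS i)).
have nl i : vs i != vs (ordS i).
  have := HD i; rewrite /double_edges /is_loop => /and3P[nl _ _].
  by case: (Hend i) => [[Hs Ht]|[Hs Ht]]; move: nl; rewrite Hs Ht // eq_sym.
pose q i := if S (eleft R src tgt (es i)) then eleft R src tgt (es i)
            else eright R src tgt (es i).
pose t i : R := if S (eleft R src tgt (es i)) == (src (es i) == vs i) then 1 else -1.
have Sq i : S (q i).
  rewrite /q; case: ifP => // hl.
  by have := HD i; rewrite /double_edges hl => /and3P[].
have See i : S (ee R V (es i)).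
  by have := HD i; rewrite /double_edges => /and3P[].
have qE i j : q i j = ee R V (es i) j + t i * w i j.
  rewrite /q /t /w.
  have nl' := nl i; rewrite eq_sym in nl'.
  case: (Hend i) => [[Hs Ht]|[Hs Ht]];
    case: (S (eleft R src tgt (es i))); rewrite /eleft /eright Hs Ht ?eqxx
      ?(negbTE nl') /= !ffunE; ring.
have tt i : t i * t i = 1.
  by rewrite /t; case: ifP => _; ring.
have us : uniq (lps R src tgt) by exact: undup_uniq.
have lpsee f : ee R V f \in lps R src tgt.
  by rewrite /lps mem_undup !mem_cat map_f ?mem_enum ?orbT.
have lpsq i : q i \in lps R src tgt.
  rewrite /q; case: ifP => _;
  by rewrite /lps mem_undup !mem_cat map_f ?mem_enum ?orbT.
pose lam (x : pt R V E) : R :=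
  \sum_i t i * ((x == q i)%:R - (x == ee R V (es i))%:R).
have H1 : \sum_(x <- lps R src tgt | S x) lam x = 0.
  rewrite /lam exchange_big /= big1 // => i _.
  rewrite -mulr_sumr.
  under eq_bigr => x _ do rewrite -[X in X - _]mulr1 -[X in _ - X]mulr1.
  rewrite sumrB !sum_pick //; ring.
have H2 : forall j, \sum_(x <- lps R src tgt | S x) lam x * x j = 0.
  move=> j; rewrite /lam.
  under eq_bigr => x _ do rewrite mulr_suml.
  rewrite exchange_big /=.
  under eq_bigr => i _ do
    (under eq_bigr => x _ do rewrite -mulrA mulrBl -/(_ * _);
     rewrite -mulr_sumr sumrB !sum_pick // qE addrC addKr mulrA tt mul1r).
  under eq_bigr => i _ do rewrite /w !ffunE.
  by rewrite sumrB (reindex_inj (@ordS_inj k)) /= subrr.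
have nl2 i : (inl (vs i) == inl (vs (ordS i)) :> (V + E)%type) = false.
  by apply/eqP => [[/eqP]]; rewrite (negbTE (nl i)).
pose i0 : 'I_k := Ordinal k0.
have := indep S cellS lam H1 H2 (ee R V (es i0)) (SLP _ (See i0)) (See i0).
rewrite /lam (bigD1 i0) //= big1 ?addr0.
- rewrite eqxx.
  have -> : (ee R V (es i0) == q i0) = false.
    apply/negbTE/eqP => /(congr1 (fun x : pt R V E => x (inl (vs i0)))).
    rewrite qE /w !ffunE /= eqxx (nl2 i0) => /eqP.
    rewrite add0r subr0 mulr1 eq_sym => /eqP h.
    by have := tt i0; rewrite h mul0r => /eqP; rewrite eq_sym oner_eq0.
  move=> /eqP; rewrite sub0r mulrN1 oppr_eq0 => /eqP h.
  by have := tt i0; rewrite h mul0r => /eqP; rewrite eq_sym oner_eq0.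
- move=> i ni.
  have -> : (ee R V (es i0) == q i) = false.
    apply/negbTE/eqP => /(congr1 (fun x : pt R V E => x (inl (vs i)))).
    rewrite qE /w !ffunE /= eqxx (nl2 i) => /eqP.
    rewrite add0r subr0 mulr1 eq_sym => /eqP h.
    by have := tt i; rewrite h mul0r => /eqP; rewrite eq_sym oner_eq0.
  have -> : (ee R V (es i0) == ee R V (es i)) = false.
    apply/negbTE/eqP => /(congr1 (fun x : pt R V E => x (inr (es i0)))).
    rewrite !ffunE eqxx; case: eqP => [[/ies h]|_].
      by move: ni; rewrite h eqxx.
    by move/eqP; rewrite oner_eq0.
  by rewrite subrr mulr0.
Qed.
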